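(* Let $f\in\mathbb{Q}[x]$ be a univariate numerical polynomial of degree $n$, written uniquely as $f(x)=\sum_{i=0}^n a_i\binom{x}{i}$ with $a_i\in\mathbb{Z}$, and set $a_i=0$ for $i<0$ and $i>n$. An integer $m$ divides $\gcd\{kf(k)\mid k\in\mathbb{Z}\}$ if and only if \[ k(a_k+a_{k-1})\equiv 0\pmod m\ \text{ for all } 1\le k\le n,\qquad a_1+a_0\equiv0\pmod m,\qquad (n+1)a_n\equiv0\pmod m. \]
   Context: A numerical polynomial is a polynomial with rational coefficients taking integer values at all integers; $\binom{x}{i}=x(x-1)\cdots(x-i+1)/i!$. *)

(* Defs.v *)
From HB Require Import structures.
From mathcomp Require Import all_boot all_order all_algebra.
Set Implicit Arguments. Unset Strict Implicit. Unset Printing Implicit Defensive.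
Import Order.TTheory GRing.Theory Num.Theory.
Local Open Scope ring_scope.

Definition binom_poly (i : nat) : {poly rat} :=
  (i`!%:R)^-1 *: \prod_(j < i) ('X - (j%:R)%:P).

Definition numerical (f : {poly rat}) : Prop :=
  forall k : int, f.[k%:~R] \is a Num.int.

(* Main.v *)
Require Import Defs.
From HB Require Import structures.
From mathcomp Require Import all_boot all_order all_algebra.
From mathcomp Require Import ring.
Import Order.TTheory GRing.Theory Num.Theory.
Local Open Scope ring_scope.

Definition B (j : nat) (x : rat) : rat := (binom_poly j).[x].

Lemma BE j x : B j x = (j`!%:R)^-1 * \prod_(i < j) (x - i%:R).
Proof.
rewrite /B /binom_poly hornerZ horner_prod.
by under eq_bigr => i _ do rewrite hornerXsubC.
Qed.

Lemma B0 x : B 0 x = 1.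
Proof. by rewrite BE big_ord0 fact0 invr1 mulr1. Qed.

Lemma B_rec j x : B j.+1 x * j.+1%:R = B j x * (x - j%:R).
Proof.
rewrite !BE big_ord_recr /= factS natrM.
have h1 : (j.+1%:R : rat) != 0 by rewrite pnatr_eq0.
have h2 : (j`!%:R : rat) != 0 by rewrite pnatr_eq0 -lt0n fact_gt0.
field. by rewrite h2 addrC natr1 h1.
Qed.

Lemma B_pascal j x : B j.+1 (x + 1) = B j.+1 x + B j x.
Proof.
rewrite !BE big_ord_recl big_ord_recr /= factS natrM.
have e : forall i : nat, x + 1 - (bump 0 i)%:R = x - i%:R.
  by move=> i; rewrite /bump leq0n add1n -natr1; ring.
under eq_bigr => i _ do rewrite e.
have h1 : (j.+1%:R : rat) != 0 by rewrite pnatr_eq0.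
have h2 : (j`!%:R : rat) != 0 by rewrite pnatr_eq0 -lt0n fact_gt0.
rewrite -natr1 in h1 *.
field. by rewrite h1 h2.
Qed.

Lemma B_nat j k : B j k%:R = 'C(k, j)%:R.
Proof.
elim: k j => [|k IH] [|j]; rewrite ?B0 ?bin0 //.
  by rewrite BE big_ord_recl /= subrr mul0r mulr0 bin0n.
by rewrite -natr1 B_pascal !IH binS natrD addrC.
Qed.

Lemma B_negnat j (k : nat) : exists c : int, B j (- k%:R) = c%:~R.
Proof.
elim: j k => [|j IHj] k.
  by exists 1; rewrite B0.
elim: k => [|k IHk].
  by exists 0; rewrite oppr0 -(mulr0n 1) B_nat bin0n.
have [c Hc] := IHk.
have [d Hd] := IHj k.+1.
exists (c - d).
have := B_pascal j (- k.+1%:R).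
rewrite -natr1 opprD addrNK => E.
rewrite intrB -Hc -Hd E. by rewrite -natr1 opprD addrK.
Qed.

Lemma B_int j (k : int) : exists c : int, B j k%:~R = c%:~R.
Proof.
case: k => [k|k].
  by exists ('C(k, j)%:Z); rewrite B_nat.
rewrite NegzE intrN.
exact: B_negnat.
Qed.

Lemma g_expand (f : {poly rat}) n (a : nat -> int) :
  f = \sum_(i < n.+1) (a i)%:~R *: binom_poly i -> a n.+1 = 0 ->
  forall x, x * f.[x] = \sum_(j < n.+2) ((j%:Z * (a j + a j.-1))%:~R) * B j x.
Proof.
move=> Hf Han x.
have Ef : f.[x] = \sum_(i < n.+1) (a i)%:~R * B i x.
  by rewrite Hf horner_sum; apply: eq_bigr => i _; rewrite hornerZ.
rewrite Ef mulr_sumr.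
have step : forall i : nat, x * ((a i)%:~R * B i x) =
   (a i)%:~R * (i%:R * B i x) + (a i)%:~R * (i.+1%:R * B i.+1 x).
  move=> i. rewrite (mulrC _ (B i.+1 x)) B_rec. ring.
under eq_bigr => i _ do rewrite step.
rewrite big_split /=.
under [RHS]eq_bigr => j _ do rewrite intrM intrD mulrDr mulrDl.
rewrite big_split /= [X in _ = X + _]big_ord_recr /= Han [X in _ = _ + X]big_ord_recl /=.
rewrite ?mulr0 ?mul0r ?addr0 ?add0r.
congr (_ + _); apply: eq_bigr => i _ /=; rewrite ?/bump ?leq0n ?add1n ?add0n; ring.
Qed.

Theorem corollary3p7 (f : {poly rat}) (n : nat) (a : nat -> int) (m : int) :
  numerical f ->
  size f = n.+1 ->
  f = \sum_(i < n.+1) (a i)%:~R *: binom_poly i ->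
  (forall i, (n < i)%N -> a i = 0) ->
  ((forall k : int, exists z : int,
       (k%:~R * f.[k%:~R] : rat) = (m * z)%:~R)
   <->
   [/\ forall k : nat, (1 <= k <= n)%N -> (m %| k%:Z * (a k + a k.-1))%Z,
       (m %| a 1%N + a 0%N)%Z
     & (m %| (n.+1)%:Z * a n)%Z]).
Proof.
move=> _ _ Hf Ha.
have Han : a n.+1 = 0 by apply: Ha.
have G := @g_expand _ _ _ Hf Han.
set b := fun j : nat => (j%:Z * (a j + a j.-1))%R.
have Hbn : b n.+1 = (n.+1)%:Z * a n by rewrite /b Han add0r.
split.
- move=> H.
  have key : forall j, (j <= n.+1)%N -> forall i, (i <= j)%N -> (m %| b i)%Z.
    elim=> [|j IH] Hj i Hi.
      by rewrite leqn0 in Hi; move/eqP: Hi => ->; rewrite /b mul0r dvdz0.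
    rewrite leq_eqVlt in Hi; case/orP: Hi => [/eqP -> | Hi]; last first.
      by apply: IH => //; exact: ltnW.
    have [z Hz] := H (j.+1)%:Z.
    rewrite G in Hz.
    have E : (\sum_(i < n.+2) b i * 'C(j.+1, i)%:Z) = m * z.
      apply: (@intr_inj rat). rewrite -Hz rmorph_sum /=.
      apply: eq_bigr => i1 _. rewrite intrM.
      have -> : ((j.+1)%:Z)%:~R = (j.+1)%:R :> rat by [].
      by rewrite B_nat.
    have Hlt : (j.+1 < n.+2)%N by [].
    rewrite (bigD1 (Ordinal Hlt)) //= binn mulr1 in E.
    set rest := (X in _ + X = _) in E.
    have Hr : (m %| rest)%Z.
      apply: rpred_sum => i0 Hi.
      case: (ltnP i0 j.+1) => [lt|ge].
        by apply: dvdz_mulr; apply: IH => //; exact: ltnW.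
      have gt : (j.+1 < i0)%N.
        rewrite ltn_neqAle ge andbT; apply: contra Hi => /eqP e.
        by apply/eqP/val_inj => /=; rewrite e.
      by rewrite bin_small // mulr0 dvdz0.
    have -> : b j.+1 = (m * z) - rest by rewrite -E addrK.
    by apply: rpredB => //; apply: dvdz_mulr; exact: dvdzz.
  split.
  + move=> k /andP [k1 kn]. exact: (key n.+1 (leqnn _) k (leqW kn)).
  + by have := key n.+1 (leqnn _) 1 isT; rewrite /b mul1r.
  + by rewrite -Hbn; exact: (key n.+1 (leqnn _) n.+1 (leqnn _)).
- case=> H1 H2 H3 k.
  have Hb : forall j : 'I_n.+2, (m %| b j)%Z.
    case=> j /= Hj. case: j Hj => [|j] Hj; first by rewrite /b mul0r dvdz0.
    rewrite ltnS leq_eqVlt in Hj; case/orP: Hj => [/eqP-> | Hj]; first by rewrite Hbn.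
    by apply: H1; rewrite ltnS in Hj; rewrite Hj.
  rewrite G.
  apply: (big_ind (fun y : rat => exists z : int, y = (m * z)%:~R)).
  + by exists 0; rewrite mulr0.
  + by move=> y1 y2 [z1 ->] [z2 ->]; exists (z1 + z2); rewrite mulrDr intrD.
  + move=> i _. have [c Hc] := B_int i k. have /dvdzP [w Hw] := Hb i.
    exists (w * c). rewrite Hc -intrM. congr (_%:~R).
    rewrite -/(b i) Hw. ring.
Qed.
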